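(* Let $\pi:D\to M$ be a homomorphism from a discrete semigroup $D$ to a Hausdorff topological semigroup $M$, and let $S=D\cup_\pi M$ (a semitopological semigroup). The following are equivalent: (1) $S$ is a topological semigroup (multiplication jointly continuous); (2) for each $c\in D$ the set $D_c=\{(x,y)\in D\times D:xy=c\}$ is closed in $S\times S$. If moreover $\pi$ is finitely resolvable, then (1) and (2) are equivalent to (3) for each $c\in D$ the set $\pi^2(D_c)=\{(\pi(x),\pi(y)):(x,y)\in D_c\}$ is closed and discrete in $M\times M$, and they are implied by (4) the subspace $\pi(D)$ is discrete in $M$ and $M\setminus\pi(D)$ is a two-sided ideal in $M$.
   Context: For a discrete space $D$: if $D$ is infinite, $\alpha D=D\cup\{\infty\}$ is its one-point compactification; if $D$ is finite, $\alpha D$ is the topological sum of $D$ and an isolated point $\infty\notin D$. For a map $\pi:D\to M$, $D\cup_\pi M$ is the subspace $\{(x,\pi(x)):x\in D\}\cup(\{\infty\}\times M)$ of $\alpha D\times M$, with $D$ identified with $\{(x,\pi(x))\}$ and $M$ with $\{\infty\}\times M$. When $D$ is a semigroup, $M$ a semitopological semigroup and $\pi$ a homomorphism, $D\cup_\pi M$ carries the semigroup operation extending those of $D$ and $M$ by $xy=\pi(x)y$ for $x\in D,y\in M$ and $xy=x\pi(y)$ for $x\in M,y\in D$; this makes it a semitopological semigroup (separately continuous multiplication). The homomorphism $\pi$ is finitely resolvable if for all $a,b\in M$ and $c\in D$ the set $\{(x,y)\in D\times D:\pi(x)=a,\ \pi(y)=b,\ xy=c\}$ is finite. *)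

(* Defs.v *)
From Stdlib Require Import List.
Set Implicit Arguments.

Definition is_topology (X : Type) (op : (X -> Prop) -> Prop) : Prop :=
  op (fun _ => True) /\
  (forall U V, op U -> op V -> op (fun x => U x /\ V x)) /\
  (forall F : (X -> Prop) -> Prop, (forall U, F U -> op U) ->
     op (fun x => exists U, F U /\ U x)).

Definition closed (X : Type) (op : (X -> Prop) -> Prop) (A : X -> Prop) : Prop :=
  op (fun x => ~ A x).

Definition continuous (X Y : Type) (opX : (X -> Prop) -> Prop)
  (opY : (Y -> Prop) -> Prop) (f : X -> Y) : Prop :=
  forall V, opY V -> opX (fun x => V (f x)).

Definition hausdorff (X : Type) (op : (X -> Prop) -> Prop) : Prop :=
  forall a b : X, a <> b -> exists U V, op U /\ op V /\ U a /\ V b /\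
     (forall x, U x -> V x -> False).

Definition discrete_in (X : Type) (op : (X -> Prop) -> Prop) (A : X -> Prop) : Prop :=
  forall a, A a -> exists U, op U /\ U a /\ (forall b, A b -> U b -> b = a).

Definition prod_open (X Y : Type) (opX : (X -> Prop) -> Prop)
  (opY : (Y -> Prop) -> Prop) (W : X * Y -> Prop) : Prop :=
  forall p, W p -> exists U V, opX U /\ opY V /\ U (fst p) /\ V (snd p) /\
     (forall q, U (fst q) -> V (snd q) -> W q).

Definition induced (S X : Type) (op : (X -> Prop) -> Prop) (e : S -> X)
  (W : S -> Prop) : Prop :=
  exists V, op V /\ (forall s, W s <-> V (e s)).

Definition finite_set (X : Type) (A : X -> Prop) : Prop :=
  exists l : list X, forall x, A x -> In x l.

(* alpha D for a discrete D, carrier option D with None = infinity.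
   For D infinite this is the one-point compactification; for D finite
   every set is open, i.e. the topological sum of D and an isolated point. *)
Definition alpha_open (D : Type) (U : option D -> Prop) : Prop :=
  U None -> finite_set (fun x : D => ~ U (Some x)).

Definition associative (X : Type) (m : X -> X -> X) : Prop :=
  forall x y z, m (m x y) z = m x (m y z).

Definition homomorphism (D M : Type) (mD : D -> D -> D) (mM : M -> M -> M)
  (pi : D -> M) : Prop := forall x y, pi (mD x y) = mM (pi x) (pi y).

(* The space D \cup_pi M: carrier D + M, embedded in alpha D x M. *)
Definition glue_emb (D M : Type) (pi : D -> M) (s : D + M) : option D * M :=
  match s with
  | inl x => (Some x, pi x)
  | inr m => (None, m)
  end.

Definition glue_open (D M : Type) (opM : (M -> Prop) -> Prop) (pi : D -> M) :
  (D + M -> Prop) -> Prop :=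
  induced (prod_open (@alpha_open D) opM) (glue_emb pi).

Definition glue_mul (D M : Type) (mD : D -> D -> D) (mM : M -> M -> M)
  (pi : D -> M) (s t : D + M) : D + M :=
  match s, t with
  | inl x, inl y => inl (mD x y)
  | inl x, inr b => inr (mM (pi x) b)
  | inr a, inl y => inr (mM a (pi y))
  | inr a, inr b => inr (mM a b)
  end.

Definition finitely_resolvable (D M : Type) (mD : D -> D -> D) (pi : D -> M) : Prop :=
  forall (a b : M) (c : D),
    finite_set (fun p : D * D => pi (fst p) = a /\ pi (snd p) = b /\ mD (fst p) (snd p) = c).

Definition two_sided_ideal (M : Type) (mM : M -> M -> M) (I : M -> Prop) : Prop :=
  forall a b, I a -> I (mM a b) /\ I (mM b a).

(* Main.v *)
Require Import Defs.
From Stdlib Require Import List Classical.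
Set Implicit Arguments.

Definition nbM {D M : Type} (pi : D -> M) (V : M -> Prop) (F : list D) (s : D + M) : Prop :=
  match s with inl y => ~ In y F /\ V (pi y) | inr m => V m end.

Lemma top_true (X : Type) (op : (X -> Prop) -> Prop) : is_topology op -> op (fun _ => True).
Proof. intros [H _]; exact H. Qed.

Lemma top_inter (X : Type) (op : (X -> Prop) -> Prop) U V :
  is_topology op -> op U -> op V -> op (fun x => U x /\ V x).
Proof. intros [_ [H _]]; auto. Qed.

Lemma nbM_open (D M : Type) (opM : (M -> Prop) -> Prop) (pi : D -> M) V F :
  is_topology opM -> opM V -> glue_open opM pi (nbM pi V F).
Proof.
  intros Ht HV.
  exists (fun p => (match fst p with None => True | Some y => ~ In y F end) /\ V (snd p)).
  split.
  - intros [o m] [H1 H2].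
    exists (fun o => match o with None => True | Some y => ~ In y F end), V.
    split; [|split; [exact HV|split; [exact H1|split; [exact H2|]]]].
    + intros _. exists F. intros x Hx. apply NNPP. exact Hx.
    + intros [o' m'] Ha Hb. simpl in *. auto.
  - intros [y|m]; simpl; tauto.
Qed.

Lemma single_open (D M : Type) (opM : (M -> Prop) -> Prop) (pi : D -> M) x :
  is_topology opM -> glue_open opM pi (fun s => s = inl x).
Proof.
  intros Ht. exists (fun p => fst p = Some x). split.
  - intros [o m] H; simpl in H.
    exists (fun o => o = Some x), (fun _ => True).
    split; [intro Hn; discriminate|].
    split; [apply top_true; exact Ht|].
    split; [exact H|]. split; [exact I|].
    intros q H1 _; exact H1.
  - intros [y|m]; simpl; split; intro H; inversion H; reflexivity.
Qed.

Lemma open_inr (D M : Type) (opM : (M -> Prop) -> Prop) (pi : D -> M) W m :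
  glue_open opM pi W -> W (inr m) ->
  exists V F, opM V /\ V m /\ forall s, nbM pi V F s -> W s.
Proof.
  intros [V' [HV' Heq]] Hm. apply Heq in Hm. simpl in Hm.
  destruct (HV' _ Hm) as [U [V [HU [HV [HUp [HVp Hbox]]]]]].
  simpl in HUp, HVp. destruct (HU HUp) as [F HF].
  exists V, F. split; [exact HV|split; [exact HVp|]].
  intros [y|m'] Hs; simpl in Hs; apply Heq; simpl; apply Hbox; simpl.
  - destruct (classic (U (Some y))) as [h|h]; auto. exfalso; apply (proj1 Hs); apply HF; auto.
  - tauto.
  - exact HUp.
  - exact Hs.
Qed.

Lemma fin_inter2 (M Z K : Type) (opM : (M->Prop)->Prop) (a b : M) (l : list Z)
  (Q : Z -> (M->Prop) -> (M->Prop) -> list K -> Prop) :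
  is_topology opM ->
  (forall z V1 V2 L V1' V2' L', Q z V1 V2 L -> (forall p, V1' p -> V1 p) ->
      (forall p, V2' p -> V2 p) -> incl L L' -> Q z V1' V2' L') ->
  (forall z, In z l -> exists V1 V2 L, opM V1 /\ opM V2 /\ V1 a /\ V2 b /\ Q z V1 V2 L) ->
  exists V1 V2 L, opM V1 /\ opM V2 /\ V1 a /\ V2 b /\ forall z, In z l -> Q z V1 V2 L.
Proof.
  intros Ht Hmono. induction l as [|z l IH]; intros H.
  - exists (fun _ => True), (fun _ => True), nil.
    split; [apply top_true; auto|]. split; [apply top_true; auto|]. split; [exact I|]. split; [exact I|]. intros z [].
  - destruct (H z (or_introl eq_refl)) as [V1 [V2 [L [o1 [o2 [a1 [b2 Hq]]]]]]].
    destruct IH as [W1 [W2 [L' [p1 [p2 [c1 [d2 Hq']]]]]]].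
    { intros z' Hz'. apply H. right; exact Hz'. }
    exists (fun p => V1 p /\ W1 p), (fun p => V2 p /\ W2 p), (L ++ L').
    split; [apply top_inter; auto|]. split; [apply top_inter; auto|].
    split; [auto|]. split; [auto|].
    intros z' [<-|Hz'].
    + apply (Hmono _ _ _ _ _ _ _ Hq); try (intros p [? ?]; auto). apply incl_appl, incl_refl.
    + apply (Hmono _ _ _ _ _ _ _ (Hq' z' Hz')); try (intros p [? ?]; auto). apply incl_appr, incl_refl.
Qed.

Definition LF (D M : Type) (mD : D->D->D) (opM : (M->Prop)->Prop) (pi : D->M) (c : D) (a b : M) : Prop :=
 exists V1 V2 (L : list (D*D)), opM V1 /\ opM V2 /\ V1 a /\ V2 b /\
   forall x y, mD x y = c -> V1 (pi x) -> V2 (pi y) -> In (x,y) L.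

Definition Dc (D M : Type) (mD : D->D->D) (c : D) (p : (D+M)*(D+M)) : Prop :=
  exists x y, p = (inl x, inl y) /\ mD x y = c.

Lemma K_gen (D M : Type) (mD : D->D->D) (opM : (M->Prop)->Prop) (pi : D->M) c s t :
  closed (prod_open (glue_open opM pi) (glue_open opM pi)) (@Dc D M mD c) ->
  ~ Dc mD c (s,t) ->
  exists U1 U2, glue_open opM pi U1 /\ glue_open opM pi U2 /\ U1 s /\ U2 t /\
   forall x y, U1 (inl x) -> U2 (inl y) -> mD x y <> c.
Proof.
  intros H Hn. destruct (H _ Hn) as [U [V [HU [HV [Hs [Ht Hb]]]]]].
  exists U, V. do 4 (split; [assumption|]).
  intros x y Hx Hy Heq. apply (Hb (inl x, inl y) Hx Hy). exists x, y; auto.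
Qed.

Lemma K_MM (D M : Type) (mD : D->D->D) (opM : (M->Prop)->Prop) (pi : D->M) c a b :
  closed (prod_open (glue_open opM pi) (glue_open opM pi)) (@Dc D M mD c) ->
  exists V1 F1 V2 F2, opM V1 /\ opM V2 /\ V1 a /\ V2 b /\
   forall x y, mD x y = c -> V1 (pi x) -> V2 (pi y) -> In x F1 \/ In y F2.
Proof.
  intros H. destruct (K_gen (s:=inr a) (t:=inr b) H) as [U1 [U2 [o1 [o2 [h1 [h2 Hs]]]]]].
  { intros [x [y [E _]]]. discriminate. }
  destruct (@open_inr _ _ _ _ _ _ o1 h1) as [V1 [F1 [p1 [q1 r1]]]].
  destruct (@open_inr _ _ _ _ _ _ o2 h2) as [V2 [F2 [p2 [q2 r2]]]].
  exists V1, F1, V2, F2. do 4 (split; [assumption|]).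
  intros x y E vx vy.
  destruct (classic (In x F1)) as [hx|hx]; auto.
  destruct (classic (In y F2)) as [hy|hy]; auto.
  exfalso. apply (Hs x y); auto; [apply r1|apply r2]; simpl; auto.
Qed.

Lemma K_DM (D M : Type) (mD : D->D->D) (opM : (M->Prop)->Prop) (pi : D->M) c x b :
  closed (prod_open (glue_open opM pi) (glue_open opM pi)) (@Dc D M mD c) ->
  exists V F, opM V /\ V b /\ forall y, mD x y = c -> V (pi y) -> In y F.
Proof.
  intros H. destruct (K_gen (s:=inl x) (t:=inr b) H) as [U1 [U2 [o1 [o2 [h1 [h2 Hs]]]]]].
  { intros [x' [y [E _]]]. discriminate. }
  destruct (@open_inr _ _ _ _ _ _ o2 h2) as [V2 [F2 [p2 [q2 r2]]]].
  exists V2, F2. do 2 (split; [assumption|]).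
  intros y E vy.
  destruct (classic (In y F2)) as [hy|hy]; auto.
  exfalso. apply (Hs x y); auto. apply r2; simpl; auto.
Qed.

Lemma K_MD (D M : Type) (mD : D->D->D) (opM : (M->Prop)->Prop) (pi : D->M) c a y :
  closed (prod_open (glue_open opM pi) (glue_open opM pi)) (@Dc D M mD c) ->
  exists V F, opM V /\ V a /\ forall x, mD x y = c -> V (pi x) -> In x F.
Proof.
  intros H. destruct (K_gen (s:=inr a) (t:=inl y) H) as [U1 [U2 [o1 [o2 [h1 [h2 Hs]]]]]].
  { intros [x' [y' [E _]]]. discriminate. }
  destruct (@open_inr _ _ _ _ _ _ o1 h1) as [V1 [F1 [p1 [q1 r1]]]].
  exists V1, F1. do 2 (split; [assumption|]).
  intros x E vx.
  destruct (classic (In x F1)) as [hx|hx]; auto.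
  exfalso. apply (Hs x y); auto. apply r1; simpl; auto.
Qed.

Lemma L2LF (D M : Type) (mD : D->D->D) (opM : (M->Prop)->Prop) (pi : D->M) c a b :
  is_topology opM ->
  closed (prod_open (glue_open opM pi) (glue_open opM pi)) (@Dc D M mD c) ->
  LF mD opM pi c a b.
Proof.
  intros Ht H.
  destruct (@K_MM _ _ _ _ _ c a b H) as [V1 [F1 [V2 [F2 [o1 [o2 [h1 [h2 Hs]]]]]]]].
  destruct (@fin_inter2 M D (D*D) opM b b F1
     (fun x W _ L => forall y, mD x y = c -> W (pi y) -> In (x,y) L) Ht)
     as [W2 [_ [L2 [p2 [_ [q2 [_ r2]]]]]]].
  { intros z A1 A2 L A1' A2' L' HQ s1 s2 s3 y E v. apply s3, HQ; auto. }
  { intros x _. destruct (@K_DM _ _ _ _ _ c x b H) as [V [F [oV [hV HV]]]].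
    exists V, (fun _ => True), (map (fun y => (x,y)) F).
    split; [auto|]. split; [apply top_true; auto|]. split; [auto|]. split; [exact I|].
    intros y E v. apply in_map. apply HV; auto. }
  destruct (@fin_inter2 M D (D*D) opM a a F2
     (fun y W _ L => forall x, mD x y = c -> W (pi x) -> In (x,y) L) Ht)
     as [W1 [_ [L1 [p1 [_ [q1 [_ r1]]]]]]].
  { intros z A1 A2 L A1' A2' L' HQ s1 s2 s3 y E v. apply s3, HQ; auto. }
  { intros y _. destruct (@K_MD _ _ _ _ _ c a y H) as [V [F [oV [hV HV]]]].
    exists V, (fun _ => True), (map (fun x => (x,y)) F).
    split; [auto|]. split; [apply top_true; auto|]. split; [auto|]. split; [exact I|].
    intros x E v. apply (in_map (fun x => (x,y))). apply HV; auto. }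
  exists (fun p => V1 p /\ W1 p), (fun p => V2 p /\ W2 p), (L1 ++ L2).
  split; [apply top_inter; auto|]. split; [apply top_inter; auto|].
  split; [auto|]. split; [auto|].
  intros x y E [v1 w1] [v2 w2].
  destruct (Hs x y E v1 v2) as [hx|hy].
  - apply in_or_app; right. apply r2; auto.
  - apply in_or_app; left. apply r1; auto.
Qed.

Lemma L12 (D M : Type) (mD : D->D->D) (mM : M->M->M) (opM : (M->Prop)->Prop) (pi : D->M) c :
  is_topology opM ->
  continuous (prod_open (glue_open opM pi) (glue_open opM pi)) (glue_open opM pi)
     (fun p => glue_mul mD mM pi (fst p) (snd p)) ->
  closed (prod_open (glue_open opM pi) (glue_open opM pi)) (@Dc D M mD c).
Proof.
  intros Ht Hc.
  assert (Ho : glue_open opM pi (fun s => s <> inl c)).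
  { exists (fun p => fst p <> Some c). split.
    - intros [o m] H. exists (fun o => o <> Some c), (fun _ => True).
      split.
      + intros _. exists (c :: nil). intros x Hx. left. apply NNPP in Hx. inversion Hx; reflexivity.
      + split; [apply top_true; auto|]. split; [exact H|]. split; [exact I|]. intros q h _; exact h.
    - intros [y|m]; simpl; split; intros H E; inversion E; subst; apply H; reflexivity. }
  intros p Hp.
  assert (Hp' : glue_mul mD mM pi (fst p) (snd p) <> inl c).
  { destruct p as [[x|a] [y|b]]; simpl; try discriminate.
    intro E; apply Hp; inversion E; exists x, y; auto. }
  destruct (Hc _ Ho p Hp') as [U [V [oU [oV [hU [hV Hb]]]]]].
  exists U, V. do 4 (split; [assumption|]).
  intros q h1 h2 [x [y [E1 E2]]]. apply (Hb q h1 h2). subst q; simpl. subst; reflexivity.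
Qed.

Lemma LF1 (D M : Type) (mD : D->D->D) (mM : M->M->M) (opM : (M->Prop)->Prop) (pi : D->M) :
  is_topology opM ->
  continuous (prod_open opM opM) opM (fun p => mM (fst p) (snd p)) ->
  homomorphism mD mM pi ->
  (forall c a b, LF mD opM pi c a b) ->
  continuous (prod_open (glue_open opM pi) (glue_open opM pi)) (glue_open opM pi)
     (fun p => glue_mul mD mM pi (fst p) (snd p)).
Proof.
  intros Ht HcontM Hhom HLF W HW [s t] Hst. simpl in Hst.
  destruct s as [x|a], t as [y|b].
  - exists (fun s => s = inl x), (fun s => s = inl y).
    split; [apply single_open; auto|]. split; [apply single_open; auto|].
    split; [reflexivity|]. split; [reflexivity|].
    intros [s' t'] E1 E2; simpl in *; subst; exact Hst.
  - destruct (@open_inr _ _ _ _ _ _ HW Hst) as [V [F [oV [hV HV]]]].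
    destruct (HcontM V oV (pi x, b) hV) as [V1 [V2 [o1 [o2 [h1 [h2 Hb]]]]]].
    simpl in h1, h2.
    destruct (@fin_inter2 M D D opM b b F
       (fun c' W2 _ L => forall y, mD x y = c' -> W2 (pi y) -> In y L) Ht)
       as [W2 [_ [L [p2 [_ [q2 [_ r2]]]]]]].
    { intros z A1 A2 L A1' A2' L' HQ s1 s2 s3 y E v. apply s3, HQ; auto. }
    { intros c' _. destruct (HLF c' (pi x) b) as [X1 [X2 [Lc [ox1 [ox2 [hx1 [hx2 HL]]]]]]].
      exists X2, (fun _ => True), (map snd Lc).
      split; [auto|]. split; [apply top_true; auto|]. split; [auto|]. split; [exact I|].
      intros y E v. apply (in_map snd Lc (x,y)). apply HL; auto. }
    exists (fun s => s = inl x), (nbM pi (fun m => V2 m /\ W2 m) L).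
    split; [apply single_open; auto|]. split; [apply nbM_open; auto; apply top_inter; auto|].
    split; [reflexivity|]. split; [simpl; auto|].
    intros [s' t'] E1 Hn; simpl in E1; subst s'.
    destruct t' as [y|b']; simpl in Hn |- *.
    + apply HV; simpl. split.
      * intro Hin. apply (proj1 Hn). apply (r2 _ Hin y eq_refl). tauto.
      * rewrite Hhom. apply (Hb (pi x, pi y)); simpl; tauto.
    + apply HV. simpl. apply (Hb (pi x, b')); simpl; tauto.
  - destruct (@open_inr _ _ _ _ _ _ HW Hst) as [V [F [oV [hV HV]]]].
    destruct (HcontM V oV (a, pi y) hV) as [V1 [V2 [o1 [o2 [h1 [h2 Hb]]]]]].
    simpl in h1, h2.
    destruct (@fin_inter2 M D D opM a a F
       (fun c' W1 _ L => forall x, mD x y = c' -> W1 (pi x) -> In x L) Ht)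
       as [W1 [_ [L [p1 [_ [q1 [_ r1]]]]]]].
    { intros z A1 A2 L A1' A2' L' HQ s1 s2 s3 x E v. apply s3, HQ; auto. }
    { intros c' _. destruct (HLF c' a (pi y)) as [X1 [X2 [Lc [ox1 [ox2 [hx1 [hx2 HL]]]]]]].
      exists X1, (fun _ => True), (map fst Lc).
      split; [auto|]. split; [apply top_true; auto|]. split; [auto|]. split; [exact I|].
      intros x E v. apply (in_map fst Lc (x,y)). apply HL; auto. }
    exists (nbM pi (fun m => V1 m /\ W1 m) L), (fun s => s = inl y).
    split; [apply nbM_open; auto; apply top_inter; auto|]. split; [apply single_open; auto|].
    split; [simpl; auto|]. split; [reflexivity|].
    intros [s' t'] Hn E1; simpl in E1; subst t'.
    destruct s' as [x|a']; simpl in Hn |- *.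
    + apply HV; simpl. split.
      * intro Hin. apply (proj1 Hn). apply (r1 _ Hin x eq_refl). tauto.
      * rewrite Hhom. apply (Hb (pi x, pi y)); simpl; tauto.
    + apply HV. simpl. apply (Hb (a', pi y)); simpl; tauto.
  - destruct (@open_inr _ _ _ _ _ _ HW Hst) as [V [F [oV [hV HV]]]].
    destruct (HcontM V oV (a, b) hV) as [V1 [V2 [o1 [o2 [h1 [h2 Hb]]]]]].
    simpl in h1, h2.
    destruct (@fin_inter2 M D D opM a b F
       (fun c' W1 W2 L => forall x y, mD x y = c' -> W1 (pi x) -> W2 (pi y) -> In x L) Ht)
       as [W1 [W2 [L [p1 [p2 [q1 [q2 r]]]]]]].
    { intros z A1 A2 L A1' A2' L' HQ s1 s2 s3 x y E v w. apply s3, (HQ x y); auto. }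
    { intros c' _. destruct (HLF c' a b) as [X1 [X2 [Lc [ox1 [ox2 [hx1 [hx2 HL]]]]]]].
      exists X1, X2, (map fst Lc).
      split; [auto|]. split; [auto|]. split; [auto|]. split; [auto|].
      intros x y E v w. apply (in_map fst Lc (x,y)). apply HL; auto. }
    exists (nbM pi (fun m => V1 m /\ W1 m) L), (nbM pi (fun m => V2 m /\ W2 m) nil).
    split; [apply nbM_open; auto; apply top_inter; auto|].
    split; [apply nbM_open; auto; apply top_inter; auto|].
    split; [simpl; auto|]. split; [simpl; auto|].
    intros [s' t'] Hn1 Hn2; simpl in Hn1, Hn2.
    destruct s' as [x|a'], t' as [y|b']; simpl in Hn1, Hn2 |- *; apply HV; simpl.
    + split.
      * intro Hin. apply (proj1 Hn1). apply (r _ Hin x y eq_refl); tauto.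
      * rewrite Hhom. apply (Hb (pi x, pi y)); simpl; tauto.
    + apply (Hb (pi x, b')); simpl; tauto.
    + apply (Hb (a', pi y)); simpl; tauto.
    + apply (Hb (a', b')); simpl; tauto.
Qed.

Lemma excl (M : Type) (opM : (M->Prop)->Prop) (a b a' b' : M) :
  is_topology opM -> hausdorff opM -> (a',b') <> (a,b) ->
  exists V1 V2, opM V1 /\ opM V2 /\ V1 a /\ V2 b /\ ~ (V1 a' /\ V2 b').
Proof.
  intros Ht Hh Hne. destruct (classic (a' = a)) as [E|E].
  - subst a'. assert (Hb : b <> b') by (intro; subst; apply Hne; reflexivity).
    destruct (Hh _ _ Hb) as [U [V [oU [oV [hU [hV Hd]]]]]].
    exists (fun _ => True), U. split; [apply top_true; auto|]. repeat split; auto.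
    intros [_ h]. exact (Hd _ h hV).
  - assert (Ha : a <> a') by (intro; subst; apply E; reflexivity).
    destruct (Hh _ _ Ha) as [U [V [oU [oV [hU [hV Hd]]]]]].
    exists U, (fun _ => True). split; [auto|]. split; [apply top_true; auto|]. repeat split; auto.
    intros [h _]. exact (Hd _ h hV).
Qed.

Lemma LF3 (D M : Type) (mD : D->D->D) (opM : (M->Prop)->Prop) (pi : D->M) c :
  is_topology opM -> hausdorff opM ->
  (forall a b, LF mD opM pi c a b) ->
  let A := fun q : M * M => exists x y, mD x y = c /\ q = (pi x, pi y) in
  closed (prod_open opM opM) A /\ discrete_in (prod_open opM opM) A.
Proof.
  intros Ht Hh HLF A. split.
  - intros [a b] Hn.
    destruct (HLF a b) as [V1 [V2 [L [o1 [o2 [h1 [h2 HL]]]]]]].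
    destruct (@fin_inter2 M (D*D) unit opM a b L
      (fun z W1 W2 _ => mD (fst z) (snd z) = c -> ~ (W1 (pi (fst z)) /\ W2 (pi (snd z)))) Ht)
      as [W1 [W2 [_ [p1 [p2 [q1 [q2 r]]]]]]].
    { intros z A1 A2 L0 A1' A2' L' HQ s1 s2 _ E [u v]. apply (HQ E); auto. }
    { intros [x y] _. simpl. destruct (classic (mD x y = c)) as [E|E].
      - destruct (@excl M opM a b (pi x) (pi y) Ht Hh) as [X1 [X2 [x1 [x2 [y1 [y2 Hx]]]]]].
        { intro Eq. apply Hn. exists x, y. split; auto. }
        exists X1, X2, nil. repeat split; auto.
      - exists (fun _ => True), (fun _ => True), nil.
        split; [apply top_true; auto|]. split; [apply top_true; auto|].
        repeat split; auto; try (intro; contradiction). }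
    exists (fun m => V1 m /\ W1 m), (fun m => V2 m /\ W2 m).
    split; [apply top_inter; auto|]. split; [apply top_inter; auto|].
    split; [simpl; auto|]. split; [simpl; auto|].
    intros q [u1 w1] [u2 w2] [x [y [E Eq]]]. subst q. simpl in *.
    apply (r (x,y) (HL x y E u1 u2) E). simpl; auto.
  - intros q [x0 [y0 [E0 Eq0]]]. subst q.
    destruct (HLF (pi x0) (pi y0)) as [V1 [V2 [L [o1 [o2 [h1 [h2 HL]]]]]]].
    destruct (@fin_inter2 M (D*D) unit opM (pi x0) (pi y0) L
      (fun z W1 W2 _ => mD (fst z) (snd z) = c -> (pi (fst z), pi (snd z)) <> (pi x0, pi y0) ->
          ~ (W1 (pi (fst z)) /\ W2 (pi (snd z)))) Ht)
      as [W1 [W2 [_ [p1 [p2 [q1 [q2 r]]]]]]].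
    { intros z A1 A2 L0 A1' A2' L' HQ s1 s2 _ E Ne [u v]. apply (HQ E Ne); auto. }
    { intros [x y] _. simpl.
      destruct (classic ((pi x, pi y) <> (pi x0, pi y0))) as [Ne|Ne].
      - destruct (@excl M opM (pi x0) (pi y0) (pi x) (pi y) Ht Hh Ne) as [X1 [X2 [x1 [x2 [y1 [y2 Hx]]]]]].
        exists X1, X2, nil. repeat split; auto.
      - exists (fun _ => True), (fun _ => True), nil.
        split; [apply top_true; auto|]. split; [apply top_true; auto|].
        repeat split; auto; try (intros _ h; contradiction). }
    exists (fun q => (V1 (fst q) /\ W1 (fst q)) /\ (V2 (snd q) /\ W2 (snd q))).
    split; [|split].
    + intros p Hp. exists (fun m => V1 m /\ W1 m), (fun m => V2 m /\ W2 m).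
      split; [apply top_inter; auto|]. split; [apply top_inter; auto|].
      split; [tauto|]. split; [tauto|]. intros q' a1 a2; auto.
    + simpl; auto.
    + intros q [x [y [E Eq]]] [[u1 w1] [u2 w2]]. subst q. simpl in *.
      apply NNPP. intro Ne. apply (r (x,y) (HL x y E u1 u2) E Ne). simpl; auto.
Qed.

Lemma L3LF (D M : Type) (mD : D->D->D) (opM : (M->Prop)->Prop) (pi : D->M) c a b :
  finitely_resolvable mD pi ->
  (let A := fun q : M * M => exists x y, mD x y = c /\ q = (pi x, pi y) in
   closed (prod_open opM opM) A /\ discrete_in (prod_open opM opM) A) ->
  LF mD opM pi c a b.
Proof.
  intros FR [Hc Hd].
  destruct (classic (exists x y, mD x y = c /\ (a,b) = (pi x, pi y))) as [HA|HA].
  - destruct (Hd _ HA) as [U [oU [hU Hu]]].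
    destruct (oU _ hU) as [V1 [V2 [o1 [o2 [h1 [h2 Hb]]]]]].
    destruct (FR a b c) as [L HL].
    exists V1, V2, L. do 4 (split; [assumption|]).
    intros x y E v1 v2. apply HL. simpl.
    assert (Eq : (pi x, pi y) = (a,b)).
    { apply Hu. exists x, y; auto. apply (Hb (pi x, pi y)); auto. }
    inversion Eq; auto.
  - destruct (Hc _ HA) as [V1 [V2 [o1 [o2 [h1 [h2 Hb]]]]]].
    exists V1, V2, nil. do 4 (split; [assumption|]).
    intros x y E v1 v2. exfalso. apply (Hb (pi x, pi y) v1 v2). exists x, y; auto.
Qed.

Lemma L4LF (D M : Type) (mD : D->D->D) (mM : M->M->M) (opM : (M->Prop)->Prop) (pi : D->M) c a b :
  hausdorff opM ->
  continuous (prod_open opM opM) opM (fun p => mM (fst p) (snd p)) ->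
  homomorphism mD mM pi ->
  finitely_resolvable mD pi ->
  discrete_in opM (fun m => exists x, pi x = m) ->
  two_sided_ideal mM (fun m => ~ exists x, pi x = m) ->
  LF mD opM pi c a b.
Proof.
  intros Hh HcontM Hhom FR Hdisc Hid.
  destruct (classic (mM a b = pi c)) as [E|E].
  - assert (Ha : exists x, pi x = a).
    { apply NNPP. intro Hna. destruct (Hid a b Hna) as [H1 _]. apply H1. exists c; auto. }
    assert (Hb : exists x, pi x = b).
    { apply NNPP. intro Hnb. destruct (Hid b a Hnb) as [_ H1]. apply H1. exists c; auto. }
    destruct (Hdisc a Ha) as [U1 [o1 [h1 H1]]].
    destruct (Hdisc b Hb) as [U2 [o2 [h2 H2]]].
    destruct (FR a b c) as [L HL].
    exists U1, U2, L. do 4 (split; [assumption|]).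
    intros x y Exy v1 v2. apply HL. simpl. split; [|split; [|exact Exy]].
    + apply H1; eauto.
    + apply H2; eauto.
  - destruct (Hh _ _ E) as [U [V [oU [oV [hU [hV Hd]]]]]].
    destruct (HcontM U oU (a,b) hU) as [V1 [V2 [o1 [o2 [h1 [h2 Hb]]]]]].
    exists V1, V2, nil. do 4 (split; [assumption|]).
    intros x y Exy v1 v2. exfalso.
    assert (Hu : U (mM (pi x) (pi y))) by (apply (Hb (pi x, pi y)); auto).
    rewrite <- Hhom, Exy in Hu. exact (Hd _ Hu hV).
Qed.

Theorem theorem3p2 (D M : Type) (mD : D -> D -> D) (mM : M -> M -> M)
  (opM : (M -> Prop) -> Prop) (pi : D -> M)
  (HassocD : associative mD) (HassocM : associative mM)
  (HtopM : is_topology opM) (HhausM : hausdorff opM)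
  (HcontM : continuous (prod_open opM opM) opM (fun p => mM (fst p) (snd p)))
  (Hhom : homomorphism mD mM pi) :
  let opS := glue_open opM pi in
  let mS := glue_mul mD mM pi in
  let P1 := continuous (prod_open opS opS) opS (fun p => mS (fst p) (snd p)) in
  let P2 := forall c : D,
      closed (prod_open opS opS)
        (fun p : (D + M) * (D + M) =>
           exists x y, p = (inl x, inl y) /\ mD x y = c) in
  let P3 := forall c : D,
      let A := fun q : M * M =>
                 exists x y, mD x y = c /\ q = (pi x, pi y) in
      closed (prod_open opM opM) A /\ discrete_in (prod_open opM opM) A in
  let P4 := discrete_in opM (fun m => exists x, pi x = m) /\
            two_sided_ideal mM (fun m => ~ exists x, pi x = m) in
  (P1 <-> P2) /\
  (finitely_resolvable mD pi -> (P1 <-> P3) /\ (P4 -> P1)).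
Proof.
  intros opS mS P1 P2 P3 P4.
  assert (H12 : P1 -> P2).
  { intros H c. exact (@L12 D M mD mM opM pi c HtopM H). }
  assert (HLF1 : (forall c a b, LF mD opM pi c a b) -> P1).
  { intros H. exact (@LF1 D M mD mM opM pi HtopM HcontM Hhom H). }
  assert (H2LF : P2 -> forall c a b, LF mD opM pi c a b).
  { intros H c a b. exact (@L2LF D M mD opM pi c a b HtopM (H c)). }
  split; [split; auto|].
  intros FR. split; [split|].
  - intros H c. exact (@LF3 D M mD opM pi c HtopM HhausM (H2LF (H12 H) c)).
  - intros H. apply HLF1. intros c a b. exact (@L3LF D M mD opM pi c a b FR (H c)).
  - intros [Hd Hi]. apply HLF1. intros c a b.
    exact (@L4LF D M mD mM opM pi c a b HhausM HcontM Hhom FR Hd Hi).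
Qed.
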